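(* Let $\mathcal H$ be a real Hilbert space, let $f:\mathcal H\to\mathbb R$ be convex and twice continuously differentiable with $\operatorname{argmin}_{\mathcal H} f\neq\emptyset$, let $t_0>0$, $\beta\ge 0$ and $\alpha=3$. Let $u:[t_0,+\infty[\to\mathcal H$ be a classical solution of $$\dddot u(t)+\frac{10}{t}\ddot u(t)+\frac{20}{t^2}\dot u(t)+\beta\,\nabla^2 f\Big(u(t)+\tfrac14 t\dot u(t)\Big)\Big(\tfrac54\dot u(t)+\tfrac14 t\ddot u(t)\Big)+\nabla f\Big(u(t)+\tfrac14 t\dot u(t)\Big)=0 .$$ Then there exists $C>0$ such that $f\big(u(t)+\tfrac14 t\dot u(t)\big)-\inf_{\mathcal H}f\le C/t^3$ for all sufficiently large $t$.
   Context: $\nabla^2 f$ is the Hessian of $f$; $\dot u,\ddot u,\dddot u$ are time derivatives of $u$. *)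

(* Defs.v *)
From HB Require Import structures.
From mathcomp Require Import all_boot all_order all_algebra.
From mathcomp Require Import all_classical all_reals all_analysis.
Set Implicit Arguments. Unset Strict Implicit. Unset Printing Implicit Defensive.
Import Order.TTheory GRing.Theory Num.Theory.
Import numFieldNormedType.Exports.
Local Open Scope ring_scope.
Local Open Scope classical_set_scope.

Definition is_inner_product (R : realType) (H : normedModType R)
  (ip : H -> H -> R) : Prop :=
  [/\ (forall x y, ip x y = ip y x),
      (forall a x y z, ip (a *: x + y) z = a * ip x z + ip y z)
    & (forall x, ip x x = `|x| ^+ 2)].

Definition is_gradient (R : realType) (H : normedModType R)
  (ip : H -> H -> R) (f : H -> R) (g : H -> H) : Prop :=
  forall x, differentiable f x /\ forall h, 'd f x h = ip (g x) h.

(* x |-> 'd g x is continuous for the operator norm. *)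
Definition continuous_differential (R : realType) (H : normedModType R)
  (g : H -> H) : Prop :=
  forall x (e : R), 0 < e -> exists2 d : R, 0 < d &
    forall y, `|y - x| < d -> forall h, `|'d g y h - 'd g x h| <= e * `|h|.

Definition convex_fun (R : realType) (H : normedModType R) (f : H -> R) : Prop :=
  forall (x y : H) (l : R), 0 <= l <= 1 ->
    f (l *: x + (1 - l) *: y) <= l * f x + (1 - l) * f y.

(* Main.v *)
Require Import Defs.
From HB Require Import structures.
From mathcomp Require Import all_boot all_order all_algebra.
From mathcomp Require Import all_classical all_reals all_analysis.
From mathcomp Require Import ring lra.
Import Order.TTheory GRing.Theory Num.Theory.
Import numFieldNormedType.Exports.
Local Open Scope ring_scope.
Local Open Scope classical_set_scope.
Section IP.
Variables (R : realType) (H : normedModType R) (ip : H -> H -> R).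
Hypothesis hip : is_inner_product ip.

Lemma ipC x y : ip x y = ip y x. Proof. by case: hip. Qed.
Lemma ipDl x y z : ip (x + y) z = ip x z + ip y z.
Proof. by case: hip => _ h _; have := h 1 x y z; rewrite scale1r mul1r. Qed.
Lemma ipZl a x z : ip (a *: x) z = a * ip x z.
Proof. case: hip => _ h _; have := h a x 0 z; have := h 1 0 0 z.
rewrite scaler0 !addr0 mul1r => e; have -> : ip 0 z = 0 by lra. by rewrite addr0. Qed.
Lemma ipDr x y z : ip z (x + y) = ip z x + ip z y.
Proof. by rewrite ipC ipDl !(ipC z). Qed.
Lemma ipZr a x z : ip z (a *: x) = a * ip z x.
Proof. by rewrite ipC ipZl ipC. Qed.
Lemma ipNl x z : ip (- x) z = - ip x z.
Proof. by rewrite -scaleN1r ipZl mulN1r. Qed.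
Lemma ipNr x z : ip z (- x) = - ip z x.
Proof. by rewrite ipC ipNl ipC. Qed.
Lemma ipBl x y z : ip (x - y) z = ip x z - ip y z.
Proof. by rewrite ipDl ipNl. Qed.
Lemma ipBr x y z : ip z (x - y) = ip z x - ip z y.
Proof. by rewrite ipDr ipNr. Qed.
Lemma ipnn x : ip x x = `|x| ^+ 2. Proof. by case: hip. Qed.
Lemma ip_ge0 x : 0 <= ip x x. Proof. by rewrite ipnn sqr_ge0. Qed.

Lemma ip_polar x y : ip x y = (`|x + y| * `|x + y| - `|x - y| * `|x - y|) / 4.
Proof.
rewrite -!expr2 -!ipnn !ipDl !ipNl !ipDr !ipNr (ipC y x).
by field.
Qed.

Lemma ip_cont : continuous (fun z : H * H => ip z.1 z.2).
Proof.
move=> z0.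
rewrite (_ : (fun z : H * H => ip z.1 z.2) = (fun z => (`|z.1 + z.2| * `|z.1 + z.2| - `|z.1 - z.2| * `|z.1 - z.2|) / 4)); last first.
  by apply/funext => z; rewrite ip_polar.
have h1 : (fun z : H * H => z.1 + z.2) @ z0 --> z0.1 + z0.2.
  by apply: cvgD; [exact: cvg_fst | exact: cvg_snd].
have h2 : (fun z : H * H => z.1 - z.2) @ z0 --> z0.1 - z0.2.
  by apply: cvgB; [exact: cvg_fst | exact: cvg_snd].
apply: cvgMr_tmp.
by apply: cvgB; apply: cvgM; apply: cvg_norm.
Qed.

Lemma cont_shift (V : normedModType R) (p : R -> V) (t : R) (dp : V) :
  is_derive t 1 p dp -> (fun h : R => p (h *: 1 + t)) @ 0^' --> p t.
Proof.
move=> [dp1 _].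
have : {for 0, continuous (fun h : R => p (h *: 1 + t))}.
  exact/differentiable_continuous/derivable1_diffP/(derivable1P _ _ _).1.
by move=> /continuous_withinNx; rewrite scale0r add0r.
Qed.

Lemma is_derive_ip (p q : R -> H) (t : R) (dp dq : H) :
  is_derive t 1 p dp -> is_derive t 1 q dq ->
  is_derive t 1 (fun s => ip (p s) (q s)) (ip (p t) dq + ip dp (q t)).
Proof.
move=> Dp Dq.
have cp := @cont_shift H p t dp Dp.
case: Dp => dp1 vp; case: Dq => dq1 vq.
have L : (fun h : R => h^-1 *: (((fun s => ip (p s) (q s)) \o shift t) (h *: 1) - ip (p t) (q t))) @ 0^' --> ip (p t) dq + ip dp (q t).
  have -> : (fun h : R => h^-1 *: (((fun s => ip (p s) (q s)) \o shift t) (h *: 1) - ip (p t) (q t))) =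
     (fun h => ip (p (h *: 1 + t)) (h^-1 *: ((q \o shift t) (h *: 1) - q t)) + ip (h^-1 *: ((p \o shift t) (h *: 1) - p t)) (q t)).
    apply/funext => h /=.
    rewrite ipZr ipZl -mulrDr; congr (_ * _).
    by rewrite ipBr ipBl addrA subrK.
  apply: cvgD.
  - apply: (@continuous2_cvg _ _ _ _ _ _ _ _ ip) => //.
      exact: (ip_cont (p t, dq)).
    by rewrite -vq; exact: dq1.
  - apply: (@continuous2_cvg _ _ _ _ _ _ _ _ ip).
    + exact: (ip_cont (dp, q t)).
    + by rewrite -vp; exact: dp1.
    + exact: cvg_cst.
by apply: DeriveDef; [exact: (cvgP _ L) | exact: cvg_lim L].
Qed.

Lemma is_derive_comp (V W : normedModType R) (F : V -> W) (c : R -> V) (t : R) (dc : V) :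
  differentiable F (c t) -> is_derive t 1 c dc ->
  is_derive t 1 (F \o c) ('d F (c t) dc).
Proof.
move=> dF [dc1 vc].
have dct : differentiable c t by apply/derivable1_diffP.
have dFc : differentiable (F \o c) t by apply: differentiable_comp.
apply: DeriveDef; first exact/derivable1_diffP.
rewrite deriveE // diff_comp //=.
by rewrite -vc deriveE.
Qed.
Lemma grad_ineq (f : H -> R) (g : H -> H) : convex_fun f -> is_gradient ip f g ->
  forall x z, f x - f z <= ip (g x) (x - z).
Proof.
move=> cf gf x z.
have [dfx dfv] := gf x.
pose w := z - x.
have cvq : derivable f x w by exact: diff_derivable.
have cvr : (fun h : R => h^-1 *: ((f \o shift x) (h *: w) - f x)) @ 0^'+ --> 'D_w f x.
  move=> A /cvq /nbhs_ballP [_ /posnumP[e] xe_A].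
  by exists e%:num => //= y xe_y /gt_eqF/negbT/xe_A; exact.
have : 'D_w f x <= f z - f x.
  apply: (cvgr_to_le cvr).
  near=> h.
  have h0 : 0 < h by near: h; exact: nbhs_right_gt.
  have h1 : h <= 1 by near: h; exact: nbhs_right_le.
  have E : h *: w + x = h *: z + (1 - h) *: x.
    by rewrite /w scalerBr scalerBl scale1r -addrA [- _ + x]addrC.
  have C : f (h *: z + (1-h) *: x) <= h * f z + (1-h) * f x.
    by apply: cf; rewrite (ltW h0) h1.
  rewrite -E in C.
  rewrite /= -[h^-1 *: _]/(h^-1 * _) mulrC ler_pdivrMr //.
  nra.
rewrite deriveE // dfv /w ipBr -(ipBr).
have -> : ip (g x) (x - z) = - ip (g x) (z - x) by rewrite -ipNr opprB.
lra.
Unshelve. all: by end_near.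
Qed.
End IP.

Arguments is_derive_ip {R H ip} hip {p q t dp dq} _ _.
Arguments is_derive_comp {R V W F c t dc} _ _.
Arguments cont_shift {R V p t dp} _.
Arguments grad_ineq {R H ip} hip {f g} _ _ x z.
Arguments ipC {R H ip} hip.
Arguments ipDl {R H ip} hip.
Arguments ipZl {R H ip} hip.
Arguments ipDr {R H ip} hip.
Arguments ipZr {R H ip} hip.
Arguments ipNl {R H ip} hip.
Arguments ipNr {R H ip} hip.
Arguments ipBl {R H ip} hip.
Arguments ipBr {R H ip} hip.
Arguments ipnn {R H ip} hip.
Arguments ip_ge0 {R H ip} hip.
Arguments ip_polar {R H ip} hip.
Arguments ip_cont {R H ip} hip.
Set Implicit Arguments. Unset Strict Implicit. Set Contextual Implicit.
Section DH.
Variables (R : realType).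

Lemma D_mul (k l : R -> R) (t dk dl : R) :
  is_derive t 1 k dk -> is_derive t 1 l dl ->
  is_derive t 1 (fun s => k s * l s) (k t * dl + dk * l t).
Proof.
move=> Dk Dl; have HH := is_deriveM Dk Dl.
eapply is_derive_eq; [exact HH|]. by rewrite /GRing.scale /= [l t * _]mulrC.
Qed.

Lemma D_cst (V : normedModType R) (c : V) (t : R) : is_derive t 1 (fun _ : R => c) 0.
Proof. exact: is_derive_cst. Qed.

Lemma D_id (t : R) : is_derive t 1 (fun s : R => s) 1.
Proof. exact: is_derive_id. Qed.

Lemma D_add (V : normedModType R) (p q : R -> V) (t : R) dp dq :
  is_derive t 1 p dp -> is_derive t 1 q dq ->
  is_derive t 1 (fun s => p s + q s) (dp + dq).
Proof. move=> Dp Dq; exact: is_deriveD. Qed.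

Lemma D_sub (V : normedModType R) (p q : R -> V) (t : R) dp dq :
  is_derive t 1 p dp -> is_derive t 1 q dq ->
  is_derive t 1 (fun s => p s - q s) (dp - dq).
Proof. move=> Dp Dq; exact: is_deriveB. Qed.

Lemma D_inv (t : R) : t != 0 -> is_derive t 1 (fun s : R => s^-1) (- t ^- 2).
Proof.
move=> t0; have HH := @is_deriveV R (fun s => s) t 1 1 t0 D_id.
eapply is_derive_eq; [exact HH|]. by rewrite /GRing.scale /= mulr1.
Qed.
End DH.
Section Helpers.
Variables (R : realType) (V : normedModType R).

Lemma is_deriveZf (k : R -> R) (F : R -> V) (t dk : R) (dF : V) :
  is_derive t 1 k dk -> is_derive t 1 F dF ->
  is_derive t 1 (fun s => k s *: F s) (k t *: dF + dk *: F t).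
Proof.
move=> [dk1 vk] [dF1 vF].
have cont_k : (fun h : R => k (h *: 1 + t)) @ 0^' --> k t.
  have : {for 0, continuous (fun h : R => k (h *: 1 + t))}.
    exact/differentiable_continuous/derivable1_diffP/(derivable1P _ _ _).1.
  by move=> /continuous_withinNx; rewrite scale0r add0r.
have L : (fun h : R => h^-1 *: (((fun s => k s *: F s) \o shift t) (h *: 1) - k t *: F t)) @ 0^' --> k t *: dF + dk *: F t.
  have -> : (fun h : R => h^-1 *: (((fun s => k s *: F s) \o shift t) (h *: 1) - k t *: F t)) = 
     (fun h => k (h *: 1 + t) *: (h^-1 *: ((F \o shift t) (h *: 1) - F t)) + (h^-1 *: ((k \o shift t) (h *: 1) - k t)) *: F t).
    apply/funext => h /=.
    rewrite !scalerA [_ * h^-1]mulrC -!scalerA -scalerDr; congr (_ *: _).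
    by rewrite scalerBr scalerBl addrA subrK.
  apply: cvgD.
  - by apply: cvgZ => //; rewrite -vF; exact: dF1.
  - by apply: cvgZr_tmp; rewrite -vk; exact: dk1.
by apply: DeriveDef; [exact: (cvgP _ L) | exact: cvg_lim L].
Qed.
End Helpers.

Unset Implicit Arguments. Unset Contextual Implicit. Set Strict Implicit.

Theorem mainTheorem3 (R : realType) (H : completeNormedModType R)
  (ip : H -> H -> R) (f : H -> R) (g : H -> H) (t0 beta : R) (u : R -> H) :
  is_inner_product ip ->
  convex_fun f ->
  is_gradient ip f g ->
  (forall x, differentiable g x) ->
  continuous_differential g ->
  (exists xs : H, forall y, f xs <= f y) ->
  0 < t0 -> 0 <= beta ->
  let u1 := fun t => 'D_1 u t in
  let u2 := fun t => 'D_1 u1 t in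
  let u3 := fun t => 'D_1 u2 t in
  let x := fun t => u t + (t / 4) *: u1 t in
  (forall t, t0 < t ->
     [/\ derivable u t 1, derivable u1 t 1, derivable u2 t 1
       & {for t, continuous u3}]) ->
  (forall t, t0 < t ->
     u3 t + (10 / t) *: u2 t + (20 / t ^+ 2) *: u1 t
     + beta *: 'd g (x t) ((5 / 4) *: u1 t + (t / 4) *: u2 t)
     + g (x t) = 0) ->
  exists2 C : R, 0 < C &
    exists T : R, forall t, T <= t -> f (x t) - inf (range f) <= C / t ^+ 3.
Proof.
move=> hip cf gf dgd cdg [xs hxs] t0p b0 u1 u2 u3 x hder heq.
pose fs := f xs.
pose xd := fun s : R => (5/4) *: u1 s + (s/4) *: u2 s.
pose G := fun s => g (x s).
pose k2 := fun s : R => beta * (s * s) / 4.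
pose v := fun s => 3 *: (x s - xs) + s *: xd s + k2 s *: G s.
pose a := fun s : R => s * s * s / 4 - beta * (s * s) / 2.
pose E := fun s => a s * (f (x s) - fs) + ip (v s) (v s) / 2.
pose phi := fun s : R => 1 + 8 * beta * s^-1.
pose Phi := fun s => E s * phi s.
pose T := t0 + 8 * beta + 1.
have key : forall t, T <= t -> exists2 dp, is_derive t 1 Phi dp & dp <= 0.
  move=> t Tt.
  have ht0 : t0 < t by rewrite /T in Tt; lra.
  have tpos : 0 < t by lra.
  have t8 : 8 * beta < t by rewrite /T in Tt; lra.
  have [Du1h Du2h Du3h _] := hder t ht0.
  have Du : is_derive t 1 u (u1 t) := derivableP Du1h.
  have Du1 : is_derive t 1 u1 (u2 t) := derivableP Du2h.
  have Du2 : is_derive t 1 u2 (u3 t) := derivableP Du3h.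
  have Dq : is_derive t 1 (fun s : R => s / 4) (t * 0 + 1 * 4^-1) := D_mul D_id D_cst.
  have Dx : is_derive t 1 x (xd t).
    apply: is_derive_eq; first exact: (D_add Du (is_deriveZf Dq Du1)).
    rewrite /xd mulr0 add0r mul1r [RHS]addrC addrCA; congr (_ + _).
    rewrite -{1}(scale1r (u1 t)) -scalerDl; congr (_ *: _); lra.
  pose c := beta * t / 2 - t * t / 4.
  pose dxd := (5/4) *: u2 t + 0 *: u1 t + ((t/4) *: u3 t + (t * 0 + 1/4) *: u2 t).
  have Dxd : is_derive t 1 xd dxd := D_add (is_deriveZf D_cst Du1) (is_deriveZf Dq Du2).
  have DG : is_derive t 1 G ('d g (x t) (xd t)) := is_derive_comp (dgd (x t)) Dx.
  pose dk2 := beta * (t * t) * 0 + (beta * (t * 1 + 1 * t) + 0 * (t * t)) * 4^-1.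
  have Dk2 : is_derive t 1 k2 dk2 := D_mul (D_mul D_cst (D_mul D_id D_id)) D_cst.
  have [vd Dv S1] : exists2 vd, is_derive t 1 v vd & ip (v t) vd = c * ip (v t) (G t).
    eexists.
      exact: (D_add (D_add (is_deriveZf D_cst (D_sub Dx D_cst)) (is_deriveZf D_id Dxd)) (is_deriveZf Dk2 DG)).
    have h2 := heq t ht0.
    have h3 : ip (v t) (u3 t + (10 / t) *: u2 t + (20 / t ^+ 2) *: u1 t
     + beta *: 'd g (x t) ((5 / 4) *: u1 t + (t / 4) *: u2 t)
     + g (x t)) = 0 by rewrite h2 -(scale0r 0) (ipZr hip) mul0r.
    rewrite !(ipDr hip) !(ipZr hip) in h3.
    rewrite /dxd /dk2 /c /G /xd /k2 subr0 !(ipDr hip, ipNr hip, ipZr hip).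
    have tn0 : t != 0 by rewrite gt_eqF.
    have e3 : ip (v t) (u3 t) = - (10 / t * ip (v t) (u2 t) +
      20 / t ^+ 2 * ip (v t) (u1 t) +
      beta * ip (v t) ('d g (x t) ((5 / 4) *: u1 t + (t / 4) *: u2 t)) +
      ip (v t) (g (x t))).
      apply/eqP; rewrite -subr_eq0; apply/eqP; rewrite -h3; ring.
    by rewrite e3; field.
  have tn0 : t != 0 by rewrite gt_eqF.
  pose D := f (x t) - fs.
  pose P := ip (g (x t)) (x t - xs).
  pose Q := ip (g (x t)) (g (x t)).
  pose dE := (3 * t * t / 4 - beta * t) * D + c * (3 * P + beta * t * t / 4 * Q).
  have Df : is_derive t 1 (fun s => f (x s)) ('d f (x t) (xd t)) := is_derive_comp ((gf (x t)).1) Dx.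
  have DE : is_derive t 1 E dE.
    have Da0 := D_sub (D_mul (D_mul (D_mul (@D_id _ t) D_id) D_id) (D_cst (c := (4^-1 : R)))) (D_mul (D_mul (D_cst (c:=(beta : R))) (D_mul D_id D_id)) (D_cst (c:=(2^-1 : R)))).
    have DD := D_sub Df (D_cst (c := fs)).
    have Dvv := is_derive_ip hip Dv Dv.
    have DE0 := D_add (D_mul Da0 DD) (D_mul Dvv (D_cst (c:=(2^-1 : R)))).
    apply: (is_derive_eq DE0).
    have Ev : ip (G t) (v t) = 3 * P + t * ip (g (x t)) (xd t) + k2 t * Q.
      by rewrite /v (ipDr hip) (ipDr hip) !(ipZr hip).
    rewrite ((gf (x t)).2) (ipC hip vd) S1 mulr0 add0r (ipC hip (v t)) Ev.
    rewrite /dE /P /Q /D /c /k2 /G /=.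
    by field.
  have Dphi0 := D_add (D_cst (c:=(1:R))) (D_mul (D_cst (c := (8*beta : R))) (D_inv tn0)).
  have DP0 := D_mul DE Dphi0.
  eexists; first exact: DP0.
  have hD : 0 <= D by rewrite /D /fs subr_ge0; exact: hxs.
  have hP : D <= P := grad_ineq hip cf gf (x t) xs.
  have hQ : 0 <= Q := ip_ge0 hip _.
  have hV : 0 <= ip (v t) (v t) := ip_ge0 hip _.
  have hc : c <= 0 by rewrite /c; nra.
  have hdE : dE <= beta * t / 2 * D.
    have h1 : c * (P - D) <= 0 by apply: mulr_le0_ge0 => //; rewrite subr_ge0.
    have h2 : c * (beta * t * t / 4 * Q) <= 0.
      have hb : 0 <= beta * t * t / 4 by nra.
      by apply: mulr_le0_ge0 => //; apply: mulr_ge0.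
    have -> : dE = beta * t / 2 * D + (3 * (c * (P - D)) + c * (beta * t * t / 4 * Q)) by rewrite /dE /c; field.
    rewrite gerDl -[_ + _]opprK oppr_le0 opprD; apply: addr_ge0; rewrite oppr_ge0 //.
    exact: mulr_ge0_le0.
  have ha : t * t * t / 8 <= a t.
    have k : 0 <= t * t * (t - 4 * beta) by apply: mulr_ge0; [apply: mulr_ge0; lra | lra].
    rewrite /a; lra.
  have hE : t * t * t / 8 * D <= E t.
    have : t * t * t / 8 * D <= a t * D by apply: ler_wpM2r.
    rewrite /E /= -/D; lra.
  have hphi : 1 <= phi t <= 2.
    rewrite /phi; have h8 : 0 <= 8 * beta / t by apply: divr_ge0 => //; lra.
    have h8' : 8 * beta / t <= 1 by rewrite ler_pdivrMr //; lra.
    apply/andP; split; lra.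
  have e : E t * (0 + (8 * beta * - t ^- 2 + 0 / t)) = - (E t * (8 * beta / t ^+ 2)).
    by rewrite mul0r addr0 add0r mulrN mulrN.
  rewrite e -[1 + 8 * beta / t]/(phi t).
  have hbD : 0 <= beta * t / 2 * D.
    by apply: mulr_ge0 => //; apply: divr_ge0 => //; apply: mulr_ge0 => //; exact: ltW.
  have A1 : dE * phi t <= beta * t / 2 * D * phi t.
    by apply: ler_wpM2r => //; case/andP: hphi => h _; lra.
  have A2 : beta * t / 2 * D * phi t <= beta * t / 2 * D * 2.
    by apply: ler_wpM2l => //; case/andP: hphi.
  have A3 : beta * t * D <= E t * (8 * beta / t ^+ 2).
    have h0 : 0 <= 8 * beta / t ^+ 2 by apply: divr_ge0; [lra | exact: sqr_ge0].
    have := ler_wpM2r h0 hE.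
    by rewrite (_ : t * t * t / 8 * D * (8 * beta / t ^+ 2) = beta * t * D) //; field.
  have A4 : beta * t / 2 * D * 2 = beta * t * D by field.
  lra.
have Tpos : t0 < T by rewrite /T; lra.
have facts : forall t, T <= t -> t * t * t / 8 * (f (x t) - fs) <= Phi t /\ 0 <= Phi t.
  move=> t Tt.
  have tpos : 0 < t by lra.
  have t8 : 8 * beta < t by rewrite /T in Tt; lra.
  have hD : 0 <= f (x t) - fs by rewrite /fs subr_ge0; exact: hxs.
  have hV : 0 <= ip (v t) (v t) := ip_ge0 hip _.
  have ha : t * t * t / 8 <= a t.
    have k : 0 <= t * t * (t - 4 * beta) by apply: mulr_ge0; [apply: mulr_ge0; lra | lra].
    rewrite /a; lra.
  have h3 : 0 <= t * t * t / 8 by apply: divr_ge0 => //; apply: mulr_ge0; [apply: mulr_ge0|]; lra.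
  have hE : t * t * t / 8 * (f (x t) - fs) <= E t.
    have : t * t * t / 8 * (f (x t) - fs) <= a t * (f (x t) - fs) by apply: ler_wpM2r.
    rewrite /E /=; lra.
  have hE0 : 0 <= t * t * t / 8 * (f (x t) - fs) by apply: mulr_ge0.
  have hphi : 1 <= phi t.
    rewrite /phi; have h8 : 0 <= 8 * beta / t by apply: divr_ge0 => //; lra.
    lra.
  have : E t <= E t * phi t by rewrite ler_peMr //; lra.
  rewrite /Phi; split; lra.
have mono : forall t, T <= t -> Phi t <= Phi T.
  move=> t Tt.
  have H1 : forall y, y \in `]T, +oo[%R -> derivable Phi y 1.
    move=> y; rewrite in_itv /= andbT => Ty.
    by have [dp Dp _] := key y (ltW Ty); exact: ex_derive.
  have H2 : forall y, y \in `]T, +oo[%R -> Phi^`() y <= 0.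
    move=> y; rewrite in_itv /= andbT => Ty.
    have [dp Dp dp0] := key y (ltW Ty).
    by rewrite derive1E derive_val.
  have H3 : {within `[T, +oo[, continuous Phi}.
    apply: derivable_within_continuous => y; rewrite in_itv /= andbT => Ty.
    by have [dp Dp _] := key y Ty; exact: ex_derive.
  exact: (@ler0_derive1_nincry _ Phi T H1 H2 H3 T t (lexx T) Tt).
have hinf : fs <= inf (range f).
  apply: lb_le_inf; first by exists (f xs), xs.
  by move=> _ [y _ <-]; exact: hxs.
have [_ PT0] := facts T (lexx T).
exists (8 * Phi T + 1); first lra.
exists T => t Tt.
have tpos : 0 < t by lra.
have t3 : 0 < t ^+ 3 by apply: exprn_gt0.
have [F1 _] := facts t Tt.
have M := mono t Tt.
rewrite ler_pdivlMr //.
have e3 : t ^+ 3 = t * t * t by rewrite !exprS expr0 mulr1 mulrA.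
have : (f (x t) - inf (range f)) * t ^+ 3 <= (f (x t) - fs) * t ^+ 3.
  by apply: ler_wpM2r; [exact: ltW | lra].
rewrite e3 in t3 *; lra.
Qed.
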